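(* Let $n\ge1$ and $\lambda>0$. Let $1=x_0<x_1<\dots<x_m$ be noise amplification factors, $\lambda_j=x_j\lambda$, and let $\gamma_j=\prod_{0\le l\le m,\,l\ne j}\frac{0-x_l}{x_j-x_l}$ be the Lagrange basis polynomials evaluated at $0$; set $\Lambda=\sum_{j=0}^m|\gamma_j|$ and $\|\gamma\|_\infty=\max_j|\gamma_j|$. For each noise level $\lambda_j$ let $R_{\lambda_j}(\theta)\in[-1,1]$ be the noisy response of the sensor at phase $\theta$ (expectation of an observable $O$ with $\|O\|_\infty\le1$), and let $\overline{R}_{\lambda_j}(\theta,N_j)$ be the empirical mean of $N_j$ independent single-shot outcomes. For inference nodes $\theta_1,\dots,\theta_{2n+1}$ define the mitigated response $R_M(\theta_k)=\sum_{j=0}^m\gamma_jR_{\lambda_j}(\theta_k)$ and its estimate $\overline{R}_M(\theta_k,N_k)=\sum_{j=0}^m\gamma_j\overline{R}_{\lambda_j}(\theta_k,N_j)$, where the $N_k$ shots at node $\theta_k$ are allocated as $N_j=N_k|\gamma_j|/\Lambda$. Then, to ensure with a (constant) high probability that $|R_M(\theta_k)-\overline{R}_M(\theta_k,N_k)|\le\chi$ for all nodes $\theta_k$, it suffices that the number of shots used at each node satisfies $N_k\in\Omega\!\Big(\frac{\Lambda^3}{\chi^2\max_j|\gamma_j|}\log(n)\Big)$.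
   Context: This is the zero-noise extrapolation (Richardson extrapolation) estimate of the noiseless response from responses measured at boosted noise levels $\lambda_j$. Single-shot outcomes are eigenvalues of $O$, hence lie in $[-1,1]$; all shots are independent. *)

(* Defs.v *)
From HB Require Import structures.
From mathcomp Require Import all_boot all_order all_algebra.
From mathcomp Require Import all_classical all_reals.
From mathcomp Require Import exp.
Set Implicit Arguments. Unset Strict Implicit. Unset Printing Implicit Defensive.
Import Order.TTheory GRing.Theory Num.Theory.
Local Open Scope ring_scope.

Section ZNE.
Variable R : realType.

Definition lagr0 (m : nat) (x : 'I_m.+1 -> R) (j : 'I_m.+1) : R :=
  \prod_(l < m.+1 | l != j) ((0 - x l) / (x j - x l)).

Definition Lambda (m : nat) (x : 'I_m.+1 -> R) : R :=
  \sum_(j < m.+1) `|lagr0 x j|.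

Definition gamma_max (m : nat) (x : 'I_m.+1 -> R) : R :=
  \big[Num.max/0]_(j < m.+1) `|lagr0 x j|.

Definition shots (m : nat) (x : 'I_m.+1 -> R) (Nk : nat) (j : 'I_m.+1) : nat :=
  `|Num.ceil ((Nk%:R) * `|lagr0 x j| / Lambda x)|%N.

(* Single-shot outcome model: a finite set E of eigenvalue labels with values
   v : E -> R; at noise level l and phase t the outcome distribution is the
   pmf p l t : E -> R. *)
Definition response (E : finType) (v : E -> R) (p : R -> R -> E -> R)
  (l t : R) : R := \sum_(e : E) p l t e * v e.

(* Probability of an event under the product (= independent) law on
   I-indexed families of outcomes, coordinate i having pmf q i. *)
Definition prodProb (I E : finType) (q : I -> E -> R)
  (A : pred {ffun I -> E}) : R :=
  \sum_(w : {ffun I -> E} | A w) \prod_(i : I) q i (w i).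

(* Index set of all single shots: node k, noise level j, shot number i < N_j *)
Definition shot_index (n m : nat) (x : 'I_m.+1 -> R) (N : 'I_(2 * n).+1 -> nat)
  : finType := {kj : 'I_(2 * n).+1 * 'I_m.+1 & 'I_(shots x (N kj.1) kj.2)}.

Definition emp_mean (n m : nat) (x : 'I_m.+1 -> R) (N : 'I_(2 * n).+1 -> nat)
  (E : finType) (v : E -> R) (w : {ffun shot_index x N -> E})
  (k : 'I_(2 * n).+1) (j : 'I_m.+1) : R :=
  (shots x (N k) j)%:R^-1 *
  \sum_(i < shots x (N k) j) v (w (@existT _ (fun kj : 'I_(2 * n).+1 * 'I_m.+1 =>
                                            'I_(shots x (N kj.1) kj.2)) (k, j) i)).

Definition mitigated (m : nat) (x : 'I_m.+1 -> R) (E : finType) (v : E -> R)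
  (p : R -> R -> E -> R) (lam t : R) : R :=
  \sum_(j < m.+1) lagr0 x j * response v p (x j * lam) t.

Definition mitigated_est (n m : nat) (x : 'I_m.+1 -> R) (N : 'I_(2 * n).+1 -> nat)
  (E : finType) (v : E -> R) (w : {ffun shot_index x N -> E})
  (k : 'I_(2 * n).+1) : R :=
  \sum_(j < m.+1) lagr0 x j * emp_mean v w k j.

Definition shot_law (n m : nat) (x : 'I_m.+1 -> R) (N : 'I_(2 * n).+1 -> nat)
  (E : finType) (p : R -> R -> E -> R) (lam : R) (theta : 'I_(2 * n).+1 -> R)
  (s : shot_index x N) : E -> R :=
  p (x (tag s).2 * lam) (theta (tag s).1).

End ZNE.

(* Main.v *)
Require Import Defs.
From HB Require Import structures.
From mathcomp Require Import all_boot all_order all_algebra.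
From mathcomp Require Import all_classical all_reals.
From mathcomp Require Import sequences exp.
From mathcomp Require Import ring lra.
Import Order.TTheory GRing.Theory Num.Theory.
Local Open Scope ring_scope.
Set Implicit Arguments. Unset Strict Implicit.

Section Aux.
Variable R : realType.

Lemma expR_le_quad (y : R) : y <= 1/2 -> expR y <= 1 + y + 2 * y ^+ 2.
Proof.
move=> hy.
have h1 := expR_ge1Dx (- y).
have h2 : expR y * expR (- y) = 1 by rewrite -expRD subrr expR0.
have h3 := expR_gt0 y.
have h4 : expR y * (1 - y) <= 1.
  by rewrite -[X in _ <= X]h2 ler_pM2l.
nra.
Qed.

Lemma factorize (I E : finType) (f : I -> E -> R) :
  \sum_(w : {ffun I -> E}) \prod_i f i (w i) = \prod_i \sum_e f i e.
Proof. by rewrite bigA_distr_bigA. Qed.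

Lemma chernoff (I E : finType) (q : I -> E -> R) (Y : I -> E -> R) (c : I -> R)
  (a t : R) :
  (forall i e, 0 <= q i e) -> (forall i, \sum_e q i e = 1) ->
  (forall i, \sum_e q i e * Y i e = 0) ->
  (forall i e, `|Y i e| <= c i) -> 0 <= t -> (forall i, t * c i <= 1/2) ->
  prodProb q [pred w : {ffun I -> E} | a < \sum_i Y i (w i)] <=
  expR (- (t * a) + 2 * t ^+ 2 * \sum_i c i ^+ 2).
Proof.
move=> q0 q1 qY Yc t0 tc.
apply: (@le_trans _ _ (\sum_(w : {ffun I -> E})
   (\prod_i q i (w i)) * expR (t * (\sum_i Y i (w i) - a)))).
  rewrite /prodProb [X in X <= _]big_mkcond; apply: ler_sum => w _ /=.
  have hp : 0 <= \prod_i q i (w i) by apply: prodr_ge0.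
  case: ifP => H.
    rewrite -[X in X <= _]mulr1 ler_wpM2l //.
    apply: le_trans (expR_ge1Dx _); rewrite lerDl; apply: mulr_ge0 => //.
    by rewrite subr_ge0 ltW.
  by apply: mulr_ge0 => //; apply: expR_ge0.
have -> : \sum_(w : {ffun I -> E}) (\prod_i q i (w i)) * expR (t * (\sum_i Y i (w i) - a))
   = expR (- (t * a)) * \prod_i \sum_e (q i e * expR (t * Y i e)).
  rewrite -factorize mulr_sumr; apply: eq_bigr => w _.
  rewrite mulrBr addrC expRD mulr_sumr expR_sum mulrCA; congr (_ * _).
  by rewrite -big_split.
rewrite expRD ler_wpM2l ?expR_ge0 // mulr_sumr expR_sum.
apply: ler_prod => i _; apply/andP; split.
  by apply: sumr_ge0 => e _; apply: mulr_ge0 => //; apply: expR_ge0.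
apply: (@le_trans _ _ (\sum_e q i e * (1 + t * Y i e + 2 * (t * Y i e) ^+ 2))).
  apply: ler_sum => e _; apply: ler_wpM2l => //; apply: expR_le_quad.
  have := Yc i e; have := tc i; rewrite ler_norml => ? /andP[? ?]; nra.
apply: (@le_trans _ _ (1 + 2 * t ^+ 2 * c i ^+ 2)); last first.
  by apply: expR_ge1Dx.
have -> : \sum_e q i e * (1 + t * Y i e + 2 * (t * Y i e) ^+ 2) =
   \sum_e q i e + t * (\sum_e q i e * Y i e) + 2 * t ^+ 2 * \sum_e q i e * Y i e ^+ 2.
  rewrite !mulr_sumr -!big_split /=; apply: eq_bigr => e _; ring.
rewrite q1 qY mulr0 addr0 lerD2l ler_wpM2l //; first by nra.
apply: (@le_trans _ _ (\sum_e q i e * c i ^+ 2)).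
  apply: ler_sum => e _; apply: ler_wpM2l => //.
  have := Yc i e; rewrite ler_norml => /andP[? ?]; nra.
by rewrite -mulr_suml q1 mul1r.
Qed.


Lemma prodProb_ge0 (I E : finType) (q : I -> E -> R) A :
  (forall i e, 0 <= q i e) -> 0 <= prodProb q A.
Proof. by move=> q0; apply: sumr_ge0 => w _; apply: prodr_ge0. Qed.

Lemma prodProb_le (I E : finType) (q : I -> E -> R) (A B : pred {ffun I -> E}) :
  (forall i e, 0 <= q i e) -> (forall w, A w -> B w) ->
  prodProb q A <= prodProb q B.
Proof.
move=> q0 AB; rewrite /prodProb [X in X <= _]big_mkcond [X in _ <= X]big_mkcond.
apply: ler_sum => w _; case: ifP => Aw; first by rewrite (AB _ Aw).
by case: ifP => _ //; apply: prodr_ge0.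
Qed.

Lemma prodProb_compl (I E : finType) (q : I -> E -> R) (A : pred {ffun I -> E}) :
  (forall i, \sum_e q i e = 1) ->
  prodProb q A = 1 - prodProb q (predC A).
Proof.
move=> q1.
have : \sum_(w : {ffun I -> E}) \prod_i q i (w i) = 1.
  by rewrite factorize; apply: big1 => i _; apply: q1.
rewrite (bigID A) /= => <-.
by rewrite /prodProb addrK.
Qed.

Lemma prodProb_union (I E K : finType) (q : I -> E -> R) (G : K -> pred {ffun I -> E}) :
  (forall i e, 0 <= q i e) ->
  prodProb q [pred w | ~~ [forall k, G k w]] <= \sum_k prodProb q [pred w | ~~ G k w].
Proof.
move=> q0; rewrite /prodProb (eq_bigr (fun k => \sum_(w : {ffun I -> E})
   (if ~~ G k w then \prod_i q i (w i) else 0))); last first.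
  by move=> k _; rewrite big_mkcond.
rewrite exchange_big /= [X in X <= _]big_mkcond.
apply: ler_sum => w _ /=.
have hp : 0 <= \prod_i q i (w i) by apply: prodr_ge0.
case: ifP => [/forallPn [k Hk] | _]; last first.
  by apply: sumr_ge0 => k _; case: ifP.

rewrite (bigD1 k) //= Hk -[X in X <= _]addr0 lerD2l.
by apply: sumr_ge0 => k' _; case: ifP.
Qed.

Lemma prodProb_add (I E : finType) (q : I -> E -> R) (A B : pred {ffun I -> E}) :
  (forall i e, 0 <= q i e) ->
  prodProb q [pred w | A w || B w] <= prodProb q A + prodProb q B.
Proof.
move=> q0; rewrite /prodProb [X in X <= _]big_mkcond.
rewrite [X in _ <= X + _]big_mkcond [X in _ <= _ + X]big_mkcond -big_split.
apply: ler_sum => w _ /=.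
have hp : 0 <= \prod_i q i (w i) by apply: prodr_ge0.
by case: (A w); case: (B w) => //=; rewrite ?addr0 ?add0r // lerDl.
Qed.

Lemma chernoff2 (I E : finType) (q : I -> E -> R) (Y : I -> E -> R) (c : I -> R)
  (a t : R) :
  (forall i e, 0 <= q i e) -> (forall i, \sum_e q i e = 1) ->
  (forall i, \sum_e q i e * Y i e = 0) ->
  (forall i e, `|Y i e| <= c i) -> 0 <= t -> (forall i, t * c i <= 1/2) ->
  prodProb q [pred w : {ffun I -> E} | a < `|\sum_i Y i (w i)|] <=
  2 * expR (- (t * a) + 2 * t ^+ 2 * \sum_i c i ^+ 2).
Proof.
move=> q0 q1 qY Yc t0 tc.
pose S1 := fun w : {ffun I -> E} => \sum_i Y i (w i).
pose S2 := fun w : {ffun I -> E} => \sum_i (fun i e => - Y i e) i (w i).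
have H1 : prodProb q [pred w : {ffun I -> E} | a < `|\sum_i Y i (w i)|] <=
   prodProb q [pred w | (a < S1 w) || (a < S2 w)].
  apply: prodProb_le => // w /=; rewrite /S1 /S2 sumrN.
  case: (lerP 0 (\sum_i Y i (w i))) => h.
    by rewrite ger0_norm // => ->.
  by rewrite ltr0_norm // => ->; rewrite orbT.
have H2 : prodProb q [pred w | (a < S1 w) || (a < S2 w)] <=
   prodProb q [pred w | a < S1 w] + prodProb q [pred w | a < S2 w].
  exact: (@prodProb_add _ _ q (fun w => a < S1 w) (fun w => a < S2 w) q0).
apply: (le_trans H1); apply: (le_trans H2); rewrite /S1 /S2.
rewrite mulr2n mulrDl mul1r; apply: lerD; first exact: chernoff.
apply: (@chernoff _ _ q (fun i e => - Y i e) c a t) => //.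
  move=> i /=; rewrite (eq_bigr (fun e => - (q i e * Y i e))) ?sumrN ?qY ?oppr0 // => e _; exact: mulrN.
by move=> i e; rewrite normrN.
Qed.

End Aux.
Lemma sum_shots (R : realType) (n m : nat) (x : 'I_m.+1 -> R) (N : 'I_(2 * n).+1 -> nat)
  (F : shot_index x N -> R) :
  \sum_s F s = \sum_(k' < (2 * n).+1) \sum_(j < m.+1) \sum_(i < shots x (N k') j)
      F (@existT _ (fun kj : 'I_(2 * n).+1 * 'I_m.+1 => 'I_(shots x (N kj.1) kj.2)) (k', j) i).
Proof.
pose T := (fun kj : 'I_(2 * n).+1 * 'I_m.+1 => 'I_(shots x (N kj.1) kj.2)).
transitivity (\sum_(kj : 'I_(2 * n).+1 * 'I_m.+1) \sum_(i : T kj) F (@existT _ T kj i)).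
  rewrite (sig_big_dep (fun _ => true) (fun _ _ => true) (fun kj i => F (@existT _ T kj i))) /=.
  by apply: eq_bigr => -[[k' j] i] _.
by rewrite pair_bigA; apply: eq_bigr => -[k' j] _.
Qed.

Lemma dev_decomp (R : realType) (n m : nat) (x : 'I_m.+1 -> R) (N : 'I_(2 * n).+1 -> nat)
  (E : finType) (v : E -> R) (p : R -> R -> E -> R) (lam : R) (theta : 'I_(2 * n).+1 -> R)
  (k : 'I_(2 * n).+1) (w : {ffun shot_index x N -> E}) :
  (forall j, shots x (N k) j = 0%N -> lagr0 x j = 0) ->
  mitigated x v p lam (theta k) - mitigated_est v w k =
  \sum_s (if (tag s).1 == k then lagr0 x (tag s).2 * (shots x (N (tag s).1) (tag s).2)%:R^-1
           * (response v p (x (tag s).2 * lam) (theta k) - v (w s)) else 0).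
Proof.
move=> hN.
rewrite sum_shots (bigD1 k) //= [X in _ = _ + X]big1 ?addr0; last first.
  move=> k' nk; apply: big1 => j _; apply: big1 => i _.
  by rewrite /= (negbTE nk).
rewrite eqxx /mitigated /mitigated_est -sumrB; apply: eq_bigr => j _.
have [g0|gn0] := eqVneq (lagr0 x j) 0.
  by rewrite g0 !mul0r subr0 big1 // => i _; rewrite !mul0r.
have Nn0 : (shots x (N k) j)%:R != 0 :> R.
  by rewrite pnatr_eq0; apply/eqP => /hN; apply/eqP.
rewrite /emp_mean; set S := \sum_(i < _) _.
rewrite (eq_bigr (fun i => lagr0 x j * (shots x (N k) j)%:R^-1 * response v p (x j * lam) (theta k)
   - lagr0 x j * (shots x (N k) j)%:R^-1 * v (w (@existT _ (fun kj : 'I_(2 * n).+1 * 'I_m.+1 =>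
        'I_(shots x (N kj.1) kj.2)) (k, j) i)))); last by move=> i _; rewrite mulrBr.
rewrite sumrB sumr_const card_ord -mulr_sumr -/S -mulr_natr.
by field.
Qed.

Lemma csum (R : realType) (n m : nat) (x : 'I_m.+1 -> R) (N : 'I_(2 * n).+1 -> nat)
  (k : 'I_(2 * n).+1) (h : 'I_m.+1 -> R) :
  \sum_(s : shot_index x N) (if (tag s).1 == k then h (tag s).2 else 0) =
  \sum_j (shots x (N k) j)%:R * h j.
Proof.
rewrite sum_shots (bigD1 k) //= [X in _ + X = _]big1 ?addr0; last first.
  move=> k' nk; apply: big1 => j _; apply: big1 => i _.
  by rewrite /= (negbTE nk).
rewrite eqxx; apply: eq_bigr => j _.
by rewrite sumr_const card_ord mulr_natl.
Qed.

Lemma Lambda_ge0 (R : realType) (m : nat) (x : 'I_m.+1 -> R) : 0 <= Lambda x.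
Proof. by apply: sumr_ge0 => j _. Qed.

Lemma shots_ge (R : realType) (m : nat) (x : 'I_m.+1 -> R) (Nk : nat) (j : 'I_m.+1) :
  Nk%:R * `|lagr0 x j| / Lambda x <= (shots x Nk j)%:R.
Proof.
have a0 : 0 <= Nk%:R * `|lagr0 x j| / Lambda x.
  by apply: divr_ge0; [apply: mulr_ge0 | apply: Lambda_ge0].
rewrite /shots natr_absz [`|Num.ceil _|]ger0_norm; first exact: ceil_ge.
by rewrite ceil_ge0; apply: lt_le_trans a0; rewrite ltrN10.
Qed.

Lemma gmax_le (R : realType) (m : nat) (x : 'I_m.+1 -> R) : gamma_max x <= Lambda x.
Proof.
rewrite /gamma_max; apply: (big_ind (fun y => y <= Lambda x)).
- exact: Lambda_ge0.
- by move=> a b ha hb; rewrite ge_max ha hb.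
move=> j _; rewrite /Lambda (bigD1 j) //= lerDl; exact: sumr_ge0.
Qed.

Lemma gmax_ge (R : realType) (m : nat) (x : 'I_m.+1 -> R) j : `|lagr0 x j| <= gamma_max x.
Proof.
by rewrite /gamma_max (bigD1 j) //= le_max lexx.
Qed.

Lemma resp_bound (R : realType) (E : finType) (v : E -> R) (p : R -> R -> E -> R) l t :
  (forall e, `|v e| <= 1) -> (forall l t e, 0 <= p l t e) ->
  (forall l t, \sum_(e : E) p l t e = 1) -> `|response v p l t| <= 1.
Proof.
move=> hv hp0 hp1; rewrite /response; apply: le_trans (ler_norm_sum _ _ _) _.
rewrite -(hp1 l t); apply: ler_sum => e _.
rewrite normrM ger0_norm // -[X in _ <= X]mulr1; exact: ler_wpM2l.
Qed.

Lemma emp_bound (R : realType) (n m : nat) (x : 'I_m.+1 -> R) (N : 'I_(2 * n).+1 -> nat)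
  (E : finType) (v : E -> R) (w : {ffun shot_index x N -> E}) k j :
  (forall e, `|v e| <= 1) -> `|emp_mean v w k j| <= 1.
Proof.
move=> hv; rewrite /emp_mean normrM.
have [N0|Nn0] := eqVneq (shots x (N k) j) 0%N.
  have -> : (shots x (N k) j)%:R^-1 = 0 :> R by rewrite N0 invr0.
  by rewrite normr0 mul0r.
have Np : 0 < (shots x (N k) j)%:R :> R by rewrite ltr0n lt0n.
rewrite ger0_norm; last by rewrite invr_ge0 ler0n.
rewrite mulrC ler_pdivrMr // mul1r.
apply: le_trans (ler_norm_sum _ _ _) _.
apply: le_trans (ler_sum _ (fun i _ => hv _)) _.
by rewrite sumr_const card_ord.
Qed.

Lemma mean_zero (R : realType) (E : finType) (v : E -> R) (p : R -> R -> E -> R) l t a :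
  \sum_(e : E) p l t e = 1 ->
  \sum_e p l t e * (a * (response v p l t - v e)) = 0.
Proof.
move=> h1.
rewrite (eq_bigr (fun e => a * response v p l t * p l t e - a * (p l t e * v e))); last first.
  by move=> e _; ring.
by rewrite sumrB -!mulr_sumr h1 mulr1 /response subrr.
Qed.

Lemma final_arith (R : realType) (delta : R) (n : nat) :
  0 < delta -> (2 <= n)%N -> 6 / delta <= n%:R ->
  ((2 * n).+1)%:R * (2 * (n%:R ^+ 3)^-1) <= delta.
Proof.
move=> d0 n2 hn.
have nn2 : 2 <= n%:R :> R by rewrite (ler_nat R 2 n).
have hd : 6 <= n%:R * delta by rewrite -ler_pdivrMr.
have n3 : 0 < n%:R ^+ 3 :> R by apply: exprn_gt0; lra.
rewrite mulrA ler_pdivrMr // -natr1 natrM.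
have -> : (2%:R : R) = 2 by [].
nra.
Qed.

Unset Implicit Arguments.

Theorem mainTheorem2 (R : realType) (delta : R) (hdelta : 0 < delta < 1) :
  exists C : R, 0 < C /\ exists n0 : nat,
  forall (n : nat), (1 <= n)%N -> (n0 <= n)%N ->
  forall (lam : R), 0 < lam ->
  forall (m : nat) (x : 'I_m.+1 -> R),
    x ord0 = 1 -> (forall i j : 'I_m.+1, (i < j)%N -> x i < x j) ->
  forall (E : finType) (v : E -> R), (forall e, `|v e| <= 1) ->
  forall (p : R -> R -> E -> R),
    (forall l t e, 0 <= p l t e) -> (forall l t, \sum_(e : E) p l t e = 1) ->
  forall (theta : 'I_(2 * n).+1 -> R) (chi : R), 0 < chi ->
  forall (N : 'I_(2 * n).+1 -> nat),
    (forall k, C * (Lambda x ^+ 3 / (chi ^+ 2 * gamma_max x)) * ln (n%:R : R)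
               <= (N k)%:R) ->
    1 - delta <=
    prodProb (@shot_law R n m x N E p lam theta)
      [pred w | [forall k : 'I_(2 * n).+1,
         `|mitigated x v p lam (theta k) - mitigated_est v w k| <= chi]].
Proof.
case/andP: hdelta => d0 d1.
exists 96; split; first lra.
pose n0 := (`|Num.ceil (6 / delta)|%N + 2)%N.
have hn0 : 6 / delta <= n0%:R.
  rewrite /n0 natrD natr_absz ger0_norm; last first.
    by rewrite ceil_ge0; apply: lt_le_trans (ltrN10 R) _; apply: divr_ge0 => //; lra.
  apply: le_trans (ceil_ge _) _; rewrite lerDl; exact: ler0n.
exists n0 => n _ nn0 lam _ m x _ _ E v hv p hp0 hp1 theta chi hchi N hN.
have n2 : (2 <= n)%N by apply: leq_trans nn0; rewrite /n0 leq_addl.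
have hn : 6 / delta <= n%:R by apply: le_trans hn0 _; rewrite ler_nat.
set q := @shot_law R n m x N E p lam theta.
have q0 : forall s e, 0 <= q s e by move=> s e; apply: hp0.
have q1 : forall s, \sum_e q s e = 1 by move=> s; apply: hp1.
rewrite prodProb_compl //.
suff H : prodProb q (predC [pred w | [forall k : 'I_(2 * n).+1,
         `|mitigated x v p lam (theta k) - mitigated_est v w k| <= chi]]) <= delta by lra.
pose G := fun (k : 'I_(2 * n).+1) (w : {ffun shot_index x N -> E}) =>
   `|mitigated x v p lam (theta k) - mitigated_est v w k| <= chi.
have HU := @prodProb_union R _ _ _ q G q0.
apply: le_trans HU _.
have Lam0 := Lambda_ge0 x.
have [hbig|hsmall] := lerP (2 * Lambda x) chi.
  rewrite big1 ?ltW // => k _; rewrite /prodProb big_pred0 // => w /=.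
  suff hb : G k w by rewrite hb.
  rewrite /G /mitigated /mitigated_est -sumrB; apply: le_trans hbig.
  apply: le_trans (ler_norm_sum _ _ _) _.
  rewrite mulrC /Lambda mulr_suml; apply: ler_sum => j _.
  rewrite -mulrBr normrM ler_wpM2l //.
  apply: le_trans (ler_normB _ _) _.
  have := resp_bound (x j * lam) (theta k) hv hp0 hp1.
  have := emp_bound w k j hv; lra.
have Lpos : 0 < Lambda x by lra.
have gpos : 0 < gamma_max x.
  rewrite ltNge; apply/negP => hg.
  have : \sum_(j < m.+1) `|lagr0 x j| <= \sum_(j < m.+1) (0:R).
    by apply: ler_sum => j _; apply: le_trans (gmax_ge x j) hg.
  rewrite big1_eq -/(Lambda x); lra.
have gle := gmax_le x.
have lnpos : 0 < ln (n%:R : R) by apply: ln_gt0; rewrite ltr1n.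
have chi2 : 0 < chi ^+ 2 by apply: exprn_gt0.
have hK : forall k, 96 * (Lambda x ^+ 2 / chi ^+ 2) * ln (n%:R : R) <= (N k)%:R.
  move=> k; apply: le_trans (hN k); apply: ler_wpM2r; first exact: ltW.
  apply: ler_wpM2l; first lra.
  have -> : Lambda x ^+ 3 / (chi ^+ 2 * gamma_max x) =
            Lambda x ^+ 2 / chi ^+ 2 * (Lambda x / gamma_max x).
    by field; apply/andP; split; apply: lt0r_neq0.
  rewrite -[X in X <= _]mulr1; apply: ler_wpM2l.
    by apply: divr_ge0; [apply: exprn_ge0 | apply: ltW].

  by rewrite ler_pdivlMr // mul1r.
apply: (@le_trans _ _ (\sum_(k < (2 * n).+1) 2 * (n%:R ^+ 3)^-1)); last first.
  by rewrite sumr_const card_ord -[_ *+ (2 * n).+1]mulr_natl; apply: final_arith.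
apply: ler_sum => k _.
pose K : R := (N k)%:R.
have Kpos : 0 < K.
  apply: lt_le_trans (hK k); apply: mulr_gt0 => //; apply: mulr_gt0 => //.
  by apply: divr_gt0 => //; apply: exprn_gt0.
have hN0 : forall j, shots x (N k) j = 0%N -> lagr0 x j = 0.
  move=> j hj; have := shots_ge x (N k) j; rewrite hj -/K => h.
  rewrite ler_pdivrMr // mul0r in h.
  apply/normr0_eq0/eqP; rewrite eq_le normr_ge0 andbT.
  have := normr_ge0 (lagr0 x j); nra.
pose Y := fun (s : shot_index x N) (e : E) => if (tag s).1 == k then
   lagr0 x (tag s).2 * (shots x (N (tag s).1) (tag s).2)%:R^-1 *
   (response v p (x (tag s).2 * lam) (theta k) - v e) else 0.
pose c := fun s : shot_index x N => if (tag s).1 == k then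
   2 * (`|lagr0 x (tag s).2| * (shots x (N (tag s).1) (tag s).2)%:R^-1) else 0.
pose t := chi * K / (16 * Lambda x ^+ 2).
have step1 : prodProb q [pred w | ~~ G k w] <=
    prodProb q [pred w : {ffun shot_index x N -> E} | chi < `|\sum_s Y s (w s)|].
  apply: prodProb_le => // w /=; rewrite /G dev_decomp // -ltNge.
  by [].
apply: le_trans step1 _.
have hY : forall s, \sum_e q s e * Y s e = 0.
  move=> s; rewrite /Y; case: eqP => [hk|_]; last first.
    by rewrite big1 // => e _; rewrite mulr0.
  rewrite /q /shot_law hk; exact: mean_zero.
have hc : forall s e, `|Y s e| <= c s.
  move=> s e; rewrite /Y /c; case: eqP => _; last by rewrite normr0.
  rewrite normrM normrM [`|_^-1|]ger0_norm; last by rewrite invr_ge0 ler0n.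
  have h2 : `|response v p (x (tag s).2 * lam) (theta k) - v e| <= 2.
    apply: le_trans (ler_normB _ _) _.
    have := resp_bound (x (tag s).2 * lam) (theta k) hv hp0 hp1; have := hv e; lra.
  have h0 : 0 <= `|lagr0 x (tag s).2| * (shots x (N (tag s).1) (tag s).2)%:R^-1.
    by apply: mulr_ge0 => //; rewrite invr_ge0 ler0n.
  nra.
have ht : 0 <= t.
  by apply: divr_ge0; [apply: mulr_ge0; lra | apply: mulr_ge0 => //; apply: exprn_ge0; lra].
have htc : forall s, t * c s <= 1/2.
  move=> s; rewrite /c; case: eqP => hk; last by rewrite mulr0; lra.
  have Njpos : (0 < shots x (N (tag s).1) (tag s).2)%N :=
    leq_ltn_trans (leq0n _) (ltn_ord (tagged s)).
  rewrite hk in Njpos *.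
  set Nj := (shots x (N k) (tag s).2)%:R.
  have Njp : 0 < Nj by rewrite ltr0n.
  have hs := shots_ge x (N k) (tag s).2; rewrite -/K -/Nj ler_pdivrMr // in hs.
  set u := `|lagr0 x (tag s).2| * Nj^-1.
  have uK : u * K <= Lambda x by rewrite /u mulrAC ler_pdivrMr //; nra.
  have u0 : 0 <= u by apply: mulr_ge0 => //; rewrite invr_ge0 ltW.
  have -> : t * (2 * u) = chi * (u * K) / (8 * Lambda x ^+ 2).
    by rewrite /t; field; apply: lt0r_neq0.
  rewrite ler_pdivrMr; last by apply: mulr_gt0 => //; apply: exprn_gt0.
  have uK0 : 0 <= u * K by apply: mulr_ge0 => //; apply: ltW.
  nra.
have hcs : \sum_s c s ^+ 2 <= 4 * Lambda x / K * Lambda x.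
  rewrite (eq_bigr (fun s : shot_index x N => if (tag s).1 == k then
     (2 * (`|lagr0 x (tag s).2| * (shots x (N k) (tag s).2)%:R^-1)) ^+ 2 else 0)); last first.
    by move=> s _; rewrite /c; case: eqP => [->|_] //; rewrite expr0n.
  rewrite (@csum _ _ _ x N k (fun j => (2 * (`|lagr0 x j| * (shots x (N k) j)%:R^-1)) ^+ 2)).
  apply: (@le_trans _ _ (\sum_j 4 * Lambda x / K * `|lagr0 x j|)); last first.
    by rewrite -mulr_sumr.
  apply: ler_sum => j _.
  have [N0|Nn0] := eqVneq (shots x (N k) j) 0%N.
    rewrite N0 mul0r; apply: mulr_ge0 => //; apply: divr_ge0; [lra | exact: ltW].
  set Nj := (shots x (N k) j)%:R.
  have Njp : 0 < Nj by rewrite ltr0n lt0n.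
  have hs := shots_ge x (N k) j; rewrite -/K -/Nj ler_pdivrMr // in hs.
  set u := `|lagr0 x j| * Nj^-1.
  have e1 : Nj * u = `|lagr0 x j| by rewrite /u mulrCA mulfV ?mulr1 // lt0r_neq0.
  have uK : u <= Lambda x / K.
    by rewrite ler_pdivlMr // /u mulrAC ler_pdivrMr //; nra.
  have -> : Nj * (2 * u) ^+ 2 = 4 * u * (Nj * u) by ring.
  rewrite e1; have := normr_ge0 (lagr0 x j).
  have -> : 4 * Lambda x / K * `|lagr0 x j| = 4 * (Lambda x / K) * `|lagr0 x j| by ring.
  nra.
apply: (le_trans (@chernoff2 R _ _ q Y c chi t q0 q1 hY hc ht htc)).
rewrite ler_pM2l; last lra.
have en : (n%:R ^+ 3)^-1 = expR (- (3%:R * ln (n%:R : R))).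
  by rewrite expRN expRM_natl lnK // posrE ltr0n; apply: leq_ltn_trans n2.
rewrite en ler_expR.
apply: (@le_trans _ _ (- (t * chi) + 2 * t ^+ 2 * (4 * Lambda x / K * Lambda x))).
  by rewrite lerD2l ler_wpM2l // mulr_ge0 // exprn_ge0.
have -> : - (t * chi) + 2 * t ^+ 2 * (4 * Lambda x / K * Lambda x) =
          - (chi ^+ 2 * K / (32 * Lambda x ^+ 2)).
  by rewrite /t; field; apply/andP; split; apply: lt0r_neq0.
rewrite lerN2 ler_pdivlMr; last by apply: mulr_gt0 => //; apply: exprn_gt0.
have h96 := ler_wpM2l (ltW chi2) (hK k).
have e96 : chi ^+ 2 * (96 * (Lambda x ^+ 2 / chi ^+ 2) * ln (n%:R : R)) =
          96 * Lambda x ^+ 2 * ln (n%:R : R).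
  by field; apply: lt0r_neq0.
rewrite e96 -/K in h96.
nra.
Qed.
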